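(* Let $M\in\mathrm{SL}(2,\mathbb Z)$ be a hyperbolic matrix, $N\in\mathbb N$, and $\{\phi_j\}_{j=1}^N$ an eigenbasis of $\hat M$ in $\mathcal H_N$ (setting in the context). Let $1\le p<\infty$, $L>0$, and let $D=D(r)$ satisfy $1/D=o(r)$ as $r\to0$; let $b^\pm_{x,r}$ be the majorant/minorant trigonometric polynomials of the discs $B_2(x,r)\subset\mathbb T^2$ described in the context. Define $$\mathcal S^\pm(N,L):=\Big\{1\le j\le N:\ \sup_{x\in\mathbb T^2}\Big|\frac{\langle\mathrm{Op}_N(b^\pm_{x,r})\phi_j,\phi_j\rangle}{\mu(b^\pm_{x,r})}-1\Big|\ge L\Big\}.$$ Then $$\frac{\#\mathcal S^\pm(N,L)}{N}\le\frac{c\,D^{2(p-1)}}{L^p}\sum_{n\in\mathbb Z^2,\,1\le|n|\le D}V_p\big(N,\hat T_N(n)\big),$$ where $c$ depends on $p$.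
   Context: $M=\exp\begin{pmatrix}\gamma&\beta\\-\alpha&-\gamma\end{pmatrix}\in\mathrm{SL}(2,\mathbb Z)$, $\gamma^2>\alpha\beta$, acting on row vectors of $\mathbb T^2=\mathbb R^2/\mathbb Z^2$. Symplectic product $u\wedge v=u_2v_1-u_1v_2$. With $h=1/N$: $\hat q\psi=q\psi$, $\hat p\psi=\frac{h}{2\pi i}\psi'$, $\hat T_v=\exp(-\frac{2\pi i}{h}(v_1\hat p-v_2\hat q))$, $\hat H=\frac12\alpha\hat q^2+\frac12\beta\hat p^2+\frac\gamma2(\hat q\hat p+\hat p\hat q)$, $\hat M=e^{-2\pi i\hat H/h}$ acting on the $N$-dimensional Hilbert space $\mathcal H_N$ of distributions $\psi(q)=\sum_{k\in\mathbb Z}\Psi(k)\delta(q-(k+\kappa_1)/N)$, $\Psi(k+N)=e^{-2\pi i\kappa_2}\Psi(k)$ (fixed $\kappa\in\mathbb T^2$ chosen so that $\hat M$ preserves $\mathcal H_N$), inner product $\frac1N\sum_{k=1}^N\Psi(k)\overline{\Phi(k)}$; an eigenbasis is an orthonormal basis of eigenvectors of $\hat M$. $\hat T_N(n):=\hat T_{n/N}$; $\mathrm{Op}_N(a)=\sum_n\tilde a(n)\hat T_N(n)$ for $a(x)=\sum_n\tilde a(n)e^{2\pi i(n\wedge x)}$; $\mu(a)=\int_{\mathbb T^2}a\,dq\,dp=\tilde a(0)$. $p$-moment: $V_p(N,\hat T_N(n)):=\frac1N\sum_{j=1}^N|\langle\hat T_N(n)\phi_j,\phi_j\rangle-\mu(e^{2\pi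 i(n\wedge\cdot)})|^p$, which for $n\neq0$ equals $\frac1N\sum_j|\langle\hat T_N(n)\phi_j,\phi_j\rangle|^p$. Majorants/minorants: with $rD\ge1$, $a_r^\pm$ are trigonometric polynomials on $\mathbb T^2$ with $a_r^-\le\chi_{B_2(0,r)}\le a_r^+$, $\widetilde{a_r^\pm}(n)=0$ for $|n|\ge D$, $\widetilde{a_r^\pm}(0)=\mathrm{Vol}(B_2(0,r))+O(r/D)$, $|\widetilde{a_r^\pm}(n)|\le c_0r^2$ for all $n$ with an absolute constant $c_0$; $b^\pm_{x,r}(y):=a_r^\pm(y-x)$. *)

(* Defs.v *)
From HB Require Import structures.
From mathcomp Require Import all_boot all_order all_algebra.
From mathcomp Require Import all_classical all_reals all_analysis.
From mathcomp.real_closed Require Import complex.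



Unset Printing Implicit Defensive.

Import Order.TTheory GRing.Theory Num.Theory.
Local Open Scope ring_scope.
Local Open Scope complex_scope.

Section QuantCat.
Context {R : realType}.
Local Notation C := (R[i]).

Definition ex (t : R) : C := (cos (2 * pi * t)) +i* (sin (2 * pi * t)).

Definition wedge (u v : R * R) : R := u.2 * v.1 - u.1 * v.2.

Definition cabs (z : C) : R := let: a +i* b := z in Num.sqrt (a ^+ 2 + b ^+ 2).

Definition intpt (n : int * int) : R * R := (n.1%:~R, n.2%:~R).

Definition znorm (n : int * int) : R := Num.sqrt ((n.1 ^+ 2 + n.2 ^+ 2)%:~R).

Definition zbox (K : nat) : seq (int * int) :=
  [seq ((i%:Z - K%:Z)%R, (j%:Z - K%:Z)%R) | i <- iota 0 (K + K).+1, j <- iota 0 (K + K).+1].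

Definition trig (a : int * int -> C) (K : nat) (x : R * R) : C :=
  \sum_(n <- zbox K) a n * ex (wedge (intpt n) x).

(* mu(a) = integral of a over T^2 = a~(0) *)
Definition muC (a : int * int -> C) : C := a (0, 0).

(* Fourier coefficients of b_{x}(y) := a(y - x):
   b~(n) = a~(n) e(- n /\ x) *)
Definition bcoef (a : int * int -> C) (x : R * R) (n : int * int) : C :=
  a n * ex (- wedge (intpt n) x).

Definition inball (r : R) (y : R * R) : Prop :=
  exists m : int * int, (y.1 - m.1%:~R) ^+ 2 + (y.2 - m.2%:~R) ^+ 2 < r ^+ 2.

(* An element psi = sum_k Psi(k) delta(q-(k+kappa1)/N) is represented by
   Psi : int -> C; it lies in H_N iff Psi(k+N) = e^{-2 pi i kappa2} Psi(k). *)
Definition inHN (N : nat) (kappa : R * R) (Psi : int -> C) : Prop :=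
  forall k : int, Psi (k + N%:Z)%R = ex (- kappa.2) * Psi k.

Definition inner (N : nat) (Psi Phi : int -> C) : C :=
  (N%:R)^-1 * \sum_(k < N) Psi (k.+1)%:Z * conjc (Phi (k.+1)%:Z).

(* T_N(n) = T_{n/N} = exp(-(2 pi i/h)(v1 p - v2 q)), v = n/N, acting on H_N:
   (T_N(n) Psi)(k) = e^{(pi i/N)(2 n2 (k+kappa1) - n1 n2)} Psi(k - n1) *)
Definition TN (N : nat) (kappa : R * R) (n : int * int) (Psi : int -> C) : int -> C :=
  fun k => ex ((2 * n.2%:~R * (k%:~R + kappa.1) - (n.1 * n.2)%:~R) / (2 * N%:R))
           * Psi (k - n.1)%R.

Definition OpN (N : nat) (kappa : R * R) (a : int * int -> C) (K : nat)
  (Psi : int -> C) : int -> C :=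
  fun k => \sum_(n <- zbox K) a n * TN N kappa n Psi k.

(* mu(e^{2 pi i (n /\ .)}) *)
Definition mu_e (n : int * int) : C := if n == (0, 0) then 1 else 0.

Definition Vp (N : nat) (kappa : R * R) (phi : 'I_N -> int -> C) (p : R)
  (n : int * int) : R :=
  (N%:R)^-1 * \sum_(j < N)
     (cabs (inner N (TN N kappa n (phi j)) (phi j) - mu_e n)) `^ p.

Definition rowmul (n : int * int) (M : 'M[int]_2) : int * int :=
  (n.1 * M 0 0 + n.2 * M 1 0, n.1 * M 0 1 + n.2 * M 1 1)%R.

(* U is (up to a phase) the quantization hat M of M on H_N:
   a unitary operator of H_N satisfying the exact Egorov property
   U^{-1} T_N(n) U = T_N(n M) for all n in Z^2. *)
Definition is_quantization (N : nat) (kappa : R * R) (M : 'M[int]_2)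
  (U : (int -> C) -> (int -> C)) : Prop :=
  [/\ (forall Psi, inHN N kappa Psi -> inHN N kappa (U Psi)),
      (forall (c : C) Psi Phi, inHN N kappa Psi -> inHN N kappa Phi ->
          U (fun k => c * Psi k + Phi k) = (fun k => c * U Psi k + U Phi k)),
      (forall Psi Phi, inHN N kappa Psi -> inHN N kappa Phi ->
          inner N (U Psi) (U Phi) = inner N Psi Phi) &
      (forall n Psi, inHN N kappa Psi ->
          TN N kappa n (U Psi) = U (TN N kappa (rowmul n M) Psi))].

Definition is_eigenbasis (N : nat) (kappa : R * R)
  (U : (int -> C) -> (int -> C)) (phi : 'I_N -> int -> C) : Prop :=
  [/\ (forall j, inHN N kappa (phi j)),
      (forall i j, inner N (phi i) (phi j) = (i == j)%:R) &
      (forall j, exists lam : C, U (phi j) = (fun k => lam * phi j k))].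

Definition hyperbolic_SL2Z (M : 'M[int]_2) : Prop :=
  \det M = 1 /\ 2 < \tr M.

Definition Sexc (N : nat) (kappa : R * R) (phi : 'I_N -> int -> C)
  (a : int * int -> C) (K : nat) (L : R) : {set 'I_N} :=
  [set j : 'I_N | `[< L <= sup (range (fun x : R * R =>
      cabs (inner N (OpN N kappa (bcoef a x) K (phi j)) (phi j) / muC (bcoef a x) - 1))) >]].

End QuantCat.

(* Main.v *)
Require Import Defs.
From HB Require Import structures.
From mathcomp Require Import all_boot all_order all_algebra.
From mathcomp Require Import all_classical all_reals all_analysis.
From mathcomp.real_closed Require Import complex.
From mathcomp Require Import ring lra zify.
Import Order.TTheory GRing.Theory Num.Theory.
Local Open Scope ring_scope.
Local Open Scope complex_scope.

Lemma powR_divr (R : realType) (u c p : R) : 0 <= u -> 0 < c ->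
  (u / c) `^ p = u `^ p / c `^ p.
Proof.
move=> u0 c0; rewrite powRM // ?invr_ge0 ?(ltW c0) //; congr (_ * _).
by rewrite -powR_inv1 ?ltW // -powRrM mulN1r powRN.
Qed.

Lemma pow_mean (R : realType) (p : R) (hp : 1 <= p) (I : Type) (s : seq I)
  (f : I -> R) : (forall i, 0 <= f i) ->
  (\sum_(i <- s) f i) `^ p <= (size s)%:R `^ (p - 1) * \sum_(i <- s) f i `^ p.
Proof.
move=> f0; have p0 : 0 < p by apply: lt_le_trans hp.
elim: s => [|x s IH].
  by rewrite !big_nil powR0 ?mulr0 // gt_eqF.
rewrite !big_cons /=.
set S := \sum_(i <- s) f i; set T := \sum_(i <- s) f i `^ p.
have S0 : 0 <= S by apply: sumr_ge0.
have T0 : 0 <= T by apply: sumr_ge0 => i _; apply: powR_ge0.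
have [/size0nil s0|sn0] := eqVneq (size s) 0%N.
  by rewrite /S /T s0 !big_nil /= !addr0 powR1 mul1r.
pose m : R := (size s)%:R.
have mS : (size s).+1%:R = m + 1 :> R by rewrite /m -natr1.
have m0 : 0 < m by rewrite /m ltr0n lt0n.
have m10 : 0 < m + 1 by rewrite ltr_wpDl.
have t0 : 0 <= (m + 1)^-1 by rewrite invr_ge0 ltW.
have t1 : (m + 1)^-1 <= 1 by rewrite invf_le1 // lerDr ltW.
pose t : {i01 R} := Itv01 t0 t1.
have tE : t%:num = (m + 1)^-1 by [].
have e1 : 1 - (m + 1)^-1 = m / (m + 1).
  by field; rewrite lt0r_neq0.
have H : ((m+1)^-1 * f x + (1 - (m+1)^-1) * (S/m)) `^ p <=
    (m+1)^-1 * f x `^ p + m/(m+1) * (S/m) `^ p.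
  have := @convex_powR R p hp t (f x) (S / m).
  rewrite !inE /= !in_itv /= !andbT f0 divr_ge0 ?(ltW m0) // => /(_ isT isT).
  rewrite !convRE tE /unstable.onem e1.
  rewrite -e1.
  by move=> H; exact H.
move: H; rewrite e1.
have -> : (m + 1)^-1 * f x + m / (m + 1) * (S / m) = (f x + S) / (m + 1).
  by rewrite mulrC mulrAC mulrCA mulfV ?lt0r_neq0 // mulr1 mulrDl.
rewrite powR_divr ?addr_ge0 // powR_divr //.
move=> H.
have IH' : S `^ p / m `^ p <= T / m.
  rewrite ler_pdivrMr ?powR_gt0 //.
  apply: (le_trans IH); rewrite -(mulr_powRB1 (ltW m0) p0) -/m -/T.
  by rewrite mulrA divfK ?lt0r_neq0 // mulrC.
have H2 : (f x + S) `^ p / (m + 1) `^ p <= (f x `^ p + T) / (m + 1).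
  apply: (le_trans H).
  have -> : (f x `^ p + T) / (m + 1) = (m + 1)^-1 * f x `^ p + m / (m + 1) * (T / m).
    by field; rewrite !lt0r_neq0.
  by rewrite lerD2l ler_wpM2l // divr_ge0 // ltW.
move: H2; rewrite ler_pdivrMr ?powR_gt0 // -(mulr_powRB1 (ltW m10) p0).
by rewrite mulrA divfK ?lt0r_neq0 // mulrC mS.
Qed.

Section Helpers.
Variable R : realType.
Implicit Types z w : R[i].

Lemma cabsE z : cabs z = Normc.normc z. Proof. by []. Qed.
Lemma cabsC z : (cabs z)%:C = `|z|. Proof. by case: z. Qed.
Lemma cabs_ge0 z : 0 <= cabs z.
Proof. by case: z => a b; rewrite /cabs sqrtr_ge0. Qed.
Lemma cabsM z w : cabs (z * w) = cabs z * cabs w.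
Proof. exact: Normc.normcM. Qed.
Lemma cabsV z : cabs (z^-1) = (cabs z)^-1.
Proof. exact: Normc.normcV. Qed.
Lemma cabsD z w : cabs (z + w) <= cabs z + cabs w.
Proof. exact: (@le_normcD R z w). Qed.
Lemma cabsN z : cabs (- z) = cabs z.
Proof. exact: (@normcN R z). Qed.
Lemma cabs0 : cabs (0 : R[i]) = 0.
Proof. exact: Normc.normc0. Qed.
Lemma cabs_eq0 z : cabs z = 0 -> z = 0.
Proof. exact: Normc.eq0_normc. Qed.
Lemma cabsB z w : cabs z - cabs w <= cabs (z - w).
Proof.
have := cabsD (z - w) w; rewrite subrK => H; lra.
Qed.
Lemma cabs_sum (I : Type) (s : seq I) (P : pred I) (F : I -> R[i]) :
  cabs (\sum_(i <- s | P i) F i) <= \sum_(i <- s | P i) cabs (F i).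
Proof.
apply: (big_rec2 (fun y1 y2 => cabs y1 <= y2)); first by rewrite cabs0.
by move=> i y1 y2 _ H; apply: (le_trans (cabsD _ _)); rewrite lerD2l.
Qed.
Lemma cabs_real (x : R) : 0 <= x -> cabs x%:C = x.
Proof. by move=> x0; rewrite /cabs /= expr0n /= addr0 sqrtr_sqr ger0_norm. Qed.
Lemma ex0 : ex (0 : R) = 1.
Proof. by rewrite /ex mulr0 cos0 sin0. Qed.
Lemma cabs_ex (t : R) : cabs (ex t) = 1.
Proof. by rewrite /ex /cabs cos2Dsin2 sqrtr1. Qed.

Lemma TN0 N kappa (Psi : int -> R[i]) : TN N kappa (0, 0) Psi = Psi.
Proof.
apply: funext => k; rewrite /TN /= !mulr0 !mul0r subr0 mul0r ex0 mul1r.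
by rewrite subr0.
Qed.

Lemma inner_sum N (s : seq (int * int)) (c : int * int -> R[i])
    (T : int * int -> int -> R[i]) (Phi : int -> R[i]) :
  inner N (fun k => \sum_(n <- s) c n * T n k) Phi =
  \sum_(n <- s) c n * inner N (T n) Phi.
Proof.
rewrite /inner.
under eq_bigr do rewrite big_distrl /=.
rewrite exchange_big big_distrr /=; apply: eq_bigr => n _.
rewrite mulrCA; congr (_ * _); rewrite big_distrr /=; apply: eq_bigr => k _.
by rewrite mulrA.
Qed.

Lemma zbox0 K : (0, 0) \in zbox K.
Proof.
apply/allpairsP; exists (K, K) => /=.
have HK : K \in 0%N :: iota 1 (K + K).
  rewrite in_cons mem_iota; apply/orP; case: (posnP K) => [->|hk]; [left|right] => //; lia.
by rewrite !subrr.
Qed.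

Lemma zbox_uniq K : uniq (zbox K).
Proof.
apply: allpairs_uniq; rewrite ?iota_uniq //.
move=> [i j] [i' j'] _ _ /= [] /eqP; rewrite (inj_eq (addIr _)) => /eqP [->] /eqP.
by rewrite (inj_eq (addIr _)) => /eqP [->].
Qed.

Lemma size_zbox K : size (zbox K) = ((K + K).+1 * (K + K).+1)%N.
Proof. by rewrite /zbox size_allpairs size_iota. Qed.

Lemma znorm00 : znorm (R:=R) (0, 0) = 0.
Proof. by rewrite /znorm /= expr0n /= addr0 sqrtr0. Qed.

Lemma sq_ge1 (x y : int) : (x != 0) || (y != 0) -> 1 <= x ^+ 2 + y ^+ 2.
Proof. by case/orP => H; nia. Qed.

Lemma znorm_ge1 n : n != (0, 0) -> 1 <= znorm (R:=R) n.
Proof.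
case: n => x y H.
have H1 : 1 <= x ^+ 2 + y ^+ 2.
  by apply: sq_ge1; move: H; rewrite xpair_eqE negb_and.
rewrite /znorm /= -{1}sqrtr1 ler_sqrt.
  by rewrite ler1z.
by rewrite ler0z (le_trans _ H1).
Qed.

Lemma muC_bcoef (a : int * int -> R[i]) x : muC (bcoef a x) = a (0, 0).
Proof. by rewrite /muC /bcoef /wedge /intpt /= !mul0r subrr oppr0 ex0 mulr1. Qed.

Lemma sum_filter_le (s : seq (int * int)) (g : int * int -> R) (P Q : pred (int * int)) :
  (forall n, 0 <= g n) -> (forall n, P n -> ~~ Q n -> g n = 0) ->
  \sum_(n <- s | P n) g n <= \sum_(n <- s | Q n) g n.
Proof.
move=> g0 gQ; rewrite big_mkcond [X in _ <= X]big_mkcond; apply: ler_sum => n _.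
by case Pn: (P n); case Qn: (Q n) => //; rewrite ?gQ ?Qn.
Qed.

Lemma bcoef0 (a : int * int -> R[i]) x : bcoef a x (0, 0) = a (0, 0).
Proof. exact: muC_bcoef. Qed.

Lemma pointwise (A Dr : R) (a : int * int -> R[i]) N kappa (Phi : int -> R[i]) x K :
  inner N Phi Phi = 1 -> a (0,0) != 0 ->
  (forall n, Dr <= znorm n -> a n = 0) ->
  (forall n, n != (0,0) -> cabs (a n) <= A * cabs (a (0,0))) ->
  cabs (inner N (OpN N kappa (bcoef a x) K Phi) Phi / muC (bcoef a x) - 1)
   <= A * \sum_(n <- zbox K | (1 <= znorm (R:=R) n) && (znorm n <= Dr))
             cabs (inner N (TN N kappa n Phi) Phi - mu_e n).
Proof.
move=> h1 a00 hsupp hA.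
rewrite muC_bcoef /OpN inner_sum (bigD1_seq (0,0)) ?zbox0 ?zbox_uniq //= TN0 h1 bcoef0.
set Rest := \sum_(n <- zbox K | n != (0,0)) _.
have -> : (a (0, 0) * 1 + Rest) / a (0, 0) - 1 = Rest / a (0, 0) by field.
have c0 : 0 < cabs (a (0, 0)).
  rewrite lt_neqAle cabs_ge0 andbT eq_sym; apply/negP => /eqP /cabs_eq0 H.
  by rewrite H eqxx in a00.
rewrite cabsM cabsV ler_pdivrMr //.
apply: (le_trans (cabs_sum _ _ _ _)).
have -> : \sum_(n <- zbox K | n != (0,0)) cabs (bcoef a x n * inner N (TN N kappa n Phi) Phi)
   = \sum_(n <- zbox K | n != (0,0)) cabs (a n) * cabs (inner N (TN N kappa n Phi) Phi - mu_e n).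
  apply: eq_bigr => n hn.
  by rewrite /bcoef cabsM (cabsM (a n)) cabs_ex mulr1 /mu_e (negbTE hn) subr0.
apply: (le_trans (@sum_filter_le _ _ (fun n => n != (0,0))
   (fun n => (1 <= znorm (R:=R) n) && (znorm n <= Dr)) _ _)).
- by move=> n; rewrite mulr_ge0 ?cabs_ge0.
- move=> n hn; rewrite znorm_ge1 //= -ltNge => hD.
  by rewrite hsupp ?cabs0 ?mul0r // ltW.
rewrite mulrAC big_distrr /=; apply: ler_sum => n /andP [h1n _].
rewrite ler_wpM2r ?cabs_ge0 // hA //.
by apply/negP => /eqP E; move: h1n; rewrite E znorm00 ler10.
Qed.

Lemma main_bound (p : R) (hp : 1 <= p) (A Dr : R) (a : int * int -> R[i]) (N : nat)
  kappa (phi : 'I_N -> int -> R[i]) (L : R) :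
  (0 < N)%N -> 0 <= A -> 1 <= Dr -> 0 < L ->
  (forall j, inner N (phi j) (phi j) = 1) ->
  a (0,0) != 0 ->
  (forall n, Dr <= znorm n -> a n = 0) ->
  (forall n, n != (0,0) -> cabs (a n) <= A * cabs (a (0,0))) ->
  #|Sexc N kappa phi a (Num.truncn Dr) L|%:R / N%:R <=
  A `^ p * 9 `^ (p - 1) * Dr `^ (2 * (p - 1)) / L `^ p *
  \sum_(n <- zbox (Num.truncn Dr) | (1 <= znorm (R:=R) n) && (znorm n <= Dr)) Vp N kappa phi p n.
Proof.
move=> N0 A0 D1 L0 hnorm a00 hsupp hA.
have p0 : 0 < p by apply: lt_le_trans hp.
have p10 : 0 <= p - 1 by rewrite subr_ge0.
have Dr0 : 0 <= Dr by exact: (le_trans ler01 D1).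
set K := Num.truncn Dr.
set Q := (fun n : int * int => (1 <= znorm (R:=R) n) && (znorm n <= Dr)).
pose y j n := cabs (inner N (TN N kappa n (phi j)) (phi j) - mu_e n).
pose sQ := [seq n <- zbox K | Q n].
pose W j := \sum_(n <- zbox K | Q n) y j n `^ p.
pose C := A `^ p * 9 `^ (p - 1) * Dr `^ (2 * (p - 1)).
have hm : (size sQ)%:R `^ (p - 1) <= 9 `^ (p - 1) * Dr `^ (2 * (p - 1)).
  have hK : K%:R <= Dr by rewrite truncn_le (le_trans ler01 D1).
  have hs : (size sQ <= (K + K).+1 * (K + K).+1)%N.
    by rewrite /sQ size_filter -size_zbox count_size.
  have hs' : (size sQ)%:R <= 9 * Dr ^+ 2.
    apply: (le_trans (_ : _ <= ((K + K).+1 * (K + K).+1)%:R)); first by rewrite ler_nat.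
    rewrite natrM -natr1 natrD.
    have : (K%:R + K%:R + 1) <= 3 * Dr :> R by lra.
    move=> H3; have H0 : 0 <= (K%:R + K%:R + 1 : R) by rewrite addr_ge0 ?addr_ge0.
    apply: (le_trans (ler_pM H0 H0 H3 H3)); nra.
  apply: (le_trans (ge0_ler_powR p10 _ _ hs')); rewrite ?nnegrE ?ler0n ?mulr_ge0 ?sqr_ge0 ?Dr0 //.
  rewrite powRM ?sqr_ge0 // powRrM -[2]/(2%:R) powR_mulrn //.
have key : forall j, j \in Sexc N kappa phi a K L -> L `^ p <= C * W j.
  move=> j; rewrite inE => /asboolP HL.
  have HY : L <= A * \sum_(n <- zbox K | Q n) y j n.
    apply: (le_trans HL); apply: ge_sup.
      by eexists; exists (0, 0).
    by move=> _ [x _ <-]; apply: pointwise.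
  have Y0 : 0 <= \sum_(n <- zbox K | Q n) y j n by apply: sumr_ge0 => n _; apply: cabs_ge0.
  have := ge0_ler_powR (ltW p0) _ _ HY; rewrite ?nnegrE ?(ltW L0) ?mulr_ge0 // => /(_ isT isT).
  move=> /le_trans; apply.
  rewrite powRM // /C -!mulrA ler_wpM2l ?powR_ge0 // mulrA.
  rewrite -big_filter -/sQ.
  apply: (le_trans (@pow_mean R p hp _ sQ (y j) _)); first by move=> n; apply: cabs_ge0.
  rewrite /W -[\sum_(n <- zbox K | Q n) _]big_filter -/sQ ler_wpM2r //.
  by apply: sumr_ge0 => n _; apply: powR_ge0.
set S := Sexc N kappa phi a K L.
set V := \sum_(n <- zbox K | Q n) Vp N kappa phi p n.
have W0 : forall j, 0 <= W j by move=> j; apply: sumr_ge0 => n _; apply: powR_ge0.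
have C0 : 0 <= C by rewrite /C !mulr_ge0 ?powR_ge0.
have tot : #|S|%:R * L `^ p <= C * (N%:R * V).
  have -> : #|S|%:R * L `^ p = \sum_(j in S) L `^ p by rewrite sumr_const mulr_natl.
  apply: (le_trans (_ : _ <= \sum_(j in S) C * W j)).
    by apply: ler_sum => j /key.
  apply: (le_trans (_ : _ <= \sum_j C * W j)).
    rewrite [X in _ <= X](bigID (fun j => j \in S)) /= lerDl.
    by apply: sumr_ge0 => j _; rewrite mulr_ge0.
  rewrite -big_distrr /= ler_wpM2l // /W exchange_big /= /V big_distrr /=.
  apply: ler_sum => n _; rewrite /Vp mulrA divff ?mul1r ?pnatr_eq0 -?lt0n //.
have Lp : 0 < L `^ p by rewrite powR_gt0.
have Nr : 0 < N%:R :> R by rewrite ltr0n.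
rewrite -/C ler_pdivrMr //.
have -> : C / L `^ p * V * N%:R = C * (N%:R * V) / L `^ p.
  by field; rewrite gt_eqF.
by rewrite ler_pdivlMr.
Qed.

End Helpers.

Theorem lemma3p3 (R : realType) (p : R) (hp : 1 <= p) (c0 : R) (hc0 : 0 < c0) :
  exists2 c : R, 0 < c &
  forall (D : R -> R) (am ap : R -> int * int -> R[i]),
    (forall r, 0 < r -> 0 < D r) ->
    (* 1/D = o(r) as r -> 0 *)
    (forall eps, 0 < eps -> exists2 delta, 0 < delta &
        forall r, 0 < r < delta -> (D r)^-1 <= eps * r) ->
    (* properties of the minorant / majorant trigonometric polynomials *)
    (forall r, 0 < r < 2^-1 -> 1 <= r * D r ->
       [/\ (forall n, D r <= znorm n -> am r n = 0 /\ ap r n = 0),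
           (forall n, cabs (am r n) <= c0 * r ^+ 2 /\ cabs (ap r n) <= c0 * r ^+ 2),
           (forall y, inball r y ->
               trig (am r) (Num.truncn (D r)) y <= 1 /\ 1 <= trig (ap r) (Num.truncn (D r)) y) &
           (forall y, ~ inball r y ->
               trig (am r) (Num.truncn (D r)) y <= 0 /\ 0 <= trig (ap r) (Num.truncn (D r)) y)]) ->
    (* mu(a_r^pm) = Vol(B_2(0,r)) + O(r/D) as r -> 0 *)
    (exists C1, exists2 r1, 0 < r1 & forall r, 0 < r < r1 ->
        cabs (muC (am r) - (pi * r ^+ 2)%:C) <= C1 * (r / D r) /\
        cabs (muC (ap r) - (pi * r ^+ 2)%:C) <= C1 * (r / D r)) ->
    exists2 r0 : R, 0 < r0 &
    forall r : R, 0 < r < r0 ->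
    forall (N : nat) (kappa : R * R) (M : 'M[int]_2)
           (U : (int -> R[i]) -> (int -> R[i])) (phi : 'I_N -> int -> R[i]) (L : R),
      (0 < N)%N -> hyperbolic_SL2Z M -> is_quantization N kappa M U ->
      is_eigenbasis N kappa U phi -> 0 < L ->
      let K := Num.truncn (D r) in
      let RHS := c * (D r) `^ (2 * (p - 1)) / L `^ p *
          \sum_(n <- zbox K | (1 <= znorm (R:=R) n) && (znorm n <= D r)) Vp N kappa phi p n in
      (#|Sexc N kappa phi (ap r) K L|%:R / N%:R <= RHS) /\
      (#|Sexc N kappa phi (am r) K L|%:R / N%:R <= RHS).
Proof.
have pi0 : 0 < (pi : R) by exact: pi_gt0.
pose A := 2 * c0 / pi.
have A0 : 0 < A by rewrite /A divr_gt0 ?mulr_gt0.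
exists (A `^ p * 9 `^ (p - 1)); first by rewrite mulr_gt0 ?powR_gt0.
move=> D am ap hD ho hprops [C1 [r1 r10 hmu]].
have [d1 d10 hd1] := ho 1 ltr01.
have e20 : 0 < pi / (2 * (`|C1| + 1)) :> R.
  by rewrite divr_gt0 // mulr_gt0 // ltr_wpDl.
have [d2 d20 hd2] := ho _ e20.
exists (Num.min (Num.min 2^-1 d1) (Num.min d2 r1)).
  by rewrite !lt_min d10 d20 r10 invr_gt0 ltr0n.
move=> r /andP [r0]; rewrite !lt_min => /andP [/andP [rh rd1] /andP [rd2 rr1]].
move=> N kappa M U phi L N0 _ _ [_ horth _] L0 K RHS.
have Dp := hD r r0.
have hD1 : (D r)^-1 <= r by have := hd1 r; rewrite r0 rd1 mul1r => /(_ isT).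
have rD1 : 1 <= r * D r.
  by rewrite -ler_pdivrMr // div1r.
have D1 : 1 <= D r.
  have : r < 1 by apply: (lt_trans rh); rewrite invf_lt1 ?ltr0n // ltr1n.
  move=> r1'; nra.
have hr1 : 0 < r < 2^-1 by rewrite r0 rh.
have [hs hb _ _] := hprops r hr1 rD1.
have hr2 : 0 < r < r1 by rewrite r0 rr1.
have [hma hpa] := hmu r hr2.
have hD2 : (D r)^-1 <= pi / (2 * (`|C1| + 1)) * r by apply: hd2; rewrite r0 rd2.
have err : C1 * (r / D r) <= pi * r ^+ 2 / 2.
  have h1 : C1 * (r / D r) <= `|C1| * (r / D r).
    by rewrite ler_wpM2r ?ler_norm // divr_ge0 // ltW.
  apply: (le_trans h1).
  have h2 : r / D r <= pi / (2 * (`|C1| + 1)) * r * r.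
    by rewrite mulrC ler_wpM2r // ltW.
  apply: (le_trans (ler_wpM2l (normr_ge0 C1) h2)).
  have -> : `|C1| * (pi / (2 * (`|C1| + 1)) * r * r) = (`|C1| / (`|C1| + 1)) * (pi * r ^+ 2 / 2).
    by field; rewrite gt_eqF // ltr_wpDl.
  have hx : 0 <= pi * r ^+ 2 / 2 by rewrite divr_ge0 // mulr_ge0 ?sqr_ge0 // ltW.
  rewrite ler_piMl //.
  by rewrite ler_pdivrMr ?ltr_wpDl // mul1r lerDl.
have lowb : forall a : int * int -> R[i],
    cabs (muC a - (pi * r ^+ 2)%:C) <= C1 * (r / D r) -> pi * r ^+ 2 / 2 <= cabs (a (0, 0)).
  move=> a ha; have := @cabsB R (pi * r ^+ 2)%:C (a (0, 0)).
  have hpr : 0 <= pi * r ^+ 2 by rewrite mulr_ge0 ?sqr_ge0 // ltW.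
  rewrite cabs_real //.
  rewrite -[(_)%:C - a (0, 0)]opprB cabsN -/(muC a).
  move=> H; have := le_trans ha err; lra.
have pr0 : 0 < pi * r ^+ 2 / 2 by rewrite divr_gt0 ?mulr_gt0 ?exprn_gt0.
have gen : forall a : int * int -> R[i],
    (forall n, D r <= znorm n -> a n = 0) ->
    (forall n, cabs (a n) <= c0 * r ^+ 2) ->
    pi * r ^+ 2 / 2 <= cabs (a (0, 0)) ->
    #|Sexc N kappa phi a K L|%:R / N%:R <= RHS.
  move=> a hsa hba hla; rewrite /RHS /K.
  apply: (@main_bound R p hp A (D r) a) => //.
  - exact: ltW.
  - by move=> j; rewrite horth eqxx.
  - apply/negP => /eqP E; move: hla; rewrite E cabs0 => H.
    by move: (lt_le_trans pr0 H); rewrite ltxx.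
  - move=> n _; apply: (le_trans (hba n)).
    have eA : c0 * r ^+ 2 = A * (pi * r ^+ 2 / 2).
      rewrite /A; move: (pi : R) pi0 => q q0; field; rewrite gt_eqF //.
    rewrite eA.
    by rewrite ler_wpM2l // ltW.
split.
- apply: gen; [by move=> n /hs [] | by move=> n; case: (hb n) | exact: lowb].
- apply: gen; [by move=> n /hs [] | by move=> n; case: (hb n) | exact: lowb].
Qed.
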